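(* Let $\mathcal{B}=(T,\bowtie)$ be a block and $\mathcal S$ a valid schedule of $\mathcal{B}$. For $v\in T$ let $c(v)$ be the number of vertices of a longest directed path in $(T,\mathcal S)$ ending at $v$, let $k=\max_{v\in T}c(v)$, and let $T_i=\{v\in T: c(v)=i\}$ for $i=1,\dots,k$. Then $c$ is a proper vertex coloring of the conflict graph $(T,\bowtie)$, and $(T_1,\dots,T_k)$ is a legal partition of $T$ consisting of $k$ nonempty sets.
   Context: A block consists of a finite set $T$ of transactions with a symmetric irreflexive conflict relation $\bowtie$; its conflict graph is the undirected graph $(T,\bowtie)$. A schedule is a set $\mathcal S\subseteq T\times T$ such that the directed graph $(T,\mathcal S)$ is acyclic; it is valid if for every pair $tx\bowtie tx'$ the graph $(T,\mathcal S)$ contains a directed path from $tx$ to $tx'$ or from $tx'$ to $tx$. A set is conflict-free if no two of its elements conflict; a legal partition of $T$ is an ordered sequence of pairwise disjoint conflict-free sets whose union is $T$. *)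

(* Defs.v *)
From mathcomp Require Import all_boot.
Set Implicit Arguments. Unset Strict Implicit. Unset Printing Implicit Defensive.

(* A block: finite set of transactions T (a finType) with a conflict relation. *)
Definition conflict_rel (T : finType) (cf : rel T) : Prop :=
  symmetric cf /\ irreflexive cf.

Definition acyclic (T : finType) (S : rel T) : Prop :=
  forall (x : T) (p : seq T), p != [::] -> path S x p -> last x p != x.

(* Valid: every conflicting pair is joined by a directed path in one direction.
   ([connect S x y] = there is a directed path from x to y; conflicting
   transactions are distinct, so such a path is nonempty.) *)
Definition valid_schedule (T : finType) (cf : rel T) (S : rel T) : Prop :=
  acyclic S /\ forall x y, cf x y -> connect S x y || connect S y x.

Definition dpath (T : finType) (S : rel T) (q : seq T) : bool :=
  if q is x :: p then path S x p else false.

Definition dpath_to (T : finType) (S : rel T) (v : T) (q : seq T) : bool :=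
  dpath S q && (last v q == v).

Definition longest_path_count (T : finType) (S : rel T) (v : T) (n : nat) : Prop :=
  (exists q, dpath_to S v q /\ size q = n) /\
  (forall q, dpath_to S v q -> size q <= n).

Definition conflict_free (T : finType) (cf : rel T) (A : {set T}) : bool :=
  [forall x in A, forall y in A, ~~ cf x y].

Definition legal_partition (T : finType) (cf : rel T) (P : seq {set T}) : Prop :=
  (forall i j, i < j < size P -> [disjoint nth set0 P i & nth set0 P j]) /\
  all (conflict_free cf) P /\
  \bigcup_(A <- P) A = [set: T].

Definition proper_coloring (T : finType) (cf : rel T) (c : T -> nat) : Prop :=
  forall u v, cf u v -> c u != c v.

(* Main.v *)
Require Import Defs.
From mathcomp Require Import all_boot.
From mathcomp Require Import zify.

Lemma ext_path (T : finType) (S : rel T) (c : T -> nat) :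
  (forall v, longest_path_count S v (c v)) ->
  forall u p, path S u p -> c u + size p <= c (last u p).
Proof.
move=> Hc u p Hp.
have [[q [Hq Hs]] _] := Hc u.
have [_ H2] := Hc (last u p).
move: Hq; rewrite /dpath_to; case: q Hs => [|x q'] //= Hs /andP [Hq /eqP Hl].
have := H2 (x :: q' ++ p).
rewrite /dpath_to /= cat_path Hq last_cat Hl Hp eqxx size_cat -Hs /=.
by move=> /(_ isT).
Qed.

Lemma c_pos (T : finType) (S : rel T) (c : T -> nat) :
  (forall v, longest_path_count S v (c v)) -> forall v, 0 < c v.
Proof.
move=> Hc v; have [_ H2] := Hc v.
by have := H2 [:: v]; rewrite /dpath_to /= eqxx => /(_ isT).
Qed.

Theorem lemma3 (T : finType) (cf : rel T) (S : rel T) (c : T -> nat) :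
  conflict_rel cf ->
  valid_schedule cf S ->
  (forall v, longest_path_count S v (c v)) ->
  let k := \max_(v : T) c v in
  let Ts := [seq [set v | c v == i] | i <- iota 1 k] in
  proper_coloring cf c /\
  legal_partition cf Ts /\ size Ts = k /\ all (fun A : {set T} => A != set0) Ts.
Proof.
move=> [Hsym Hirr] [_ Hval] Hc k Ts.
have Hpos := @c_pos _ _ _ Hc.
have Hle : forall v, c v <= k by move=> v; apply: leq_bigmax.
have Hprop : proper_coloring cf c.
  move=> u v Huv.
  have Hne : u != v by apply/eqP => E; move: Huv; rewrite E Hirr.
  have strict : forall a b, a != b -> connect S a b -> c a < c b.
    move=> a b Hab /connectP [p Hp Hl].
    have := @ext_path _ _ _ Hc _ _ Hp; rewrite -Hl.
    case: p Hp Hl => [|y p] /= _ Hl; first by move: Hab; rewrite Hl eqxx.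
    lia.
  case/orP: (Hval _ _ Huv) => H.
    by have := strict _ _ Hne H; lia.
  by have := strict v u (introN eqP (fun E => negP Hne (introT eqP (esym E)))) H; lia.
split; first exact: Hprop.
split; last split.
- split; last split.
  + move=> i j /andP [Hij]; rewrite size_map size_iota => Hj.
    rewrite !(nth_map 0) ?size_iota //; last lia.
    rewrite !nth_iota //; last lia.
    apply/pred0P => v /=; rewrite !inE; apply/negP => /andP [/eqP -> /eqP]; lia.
  + apply/allP => A /mapP [i _ ->]; apply/forallP => x; apply/implyP.
    rewrite inE => /eqP Hx; apply/forallP => y; apply/implyP.
    rewrite inE => /eqP Hy; apply/negP => H.
    by have := Hprop _ _ H; rewrite Hx Hy eqxx.
  + apply/setP => v; rewrite inE bigcup_seq; apply/bigcupP.
    exists [set u | c u == c v]; last by rewrite inE.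
    apply/mapP; exists (c v) => //; rewrite mem_iota.
    by have := Hpos v; have := Hle v; lia.
- by rewrite size_map size_iota.
- apply/allP => A /mapP [i]; rewrite mem_iota => /andP [Hi1 Hik] ->.
  case: i Hi1 Hik => [//|j] _ Hik.
  have HT : 0 < #|T|.
    rewrite lt0n; apply/negP => /eqP /card0_eq H0.
    have : k <= 0 by apply/bigmax_leqP => v; have := H0 v; rewrite !inE.
    lia.
  have [v0 Hv0] := eq_bigmax c HT.
  have Hk : k = c v0 by [].
  have [[q [Hq Hs]] _] := Hc v0.
  move: Hq; rewrite /dpath_to; case: q Hs => [|x p] //= Hs /andP [Hp /eqP Hl].
  set w := last x (take j p).
  have Hp' := Hp; rewrite -(cat_take_drop j p) cat_path in Hp'.
  case/andP: Hp' => Ht Hd.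
  have Hw1 : j.+1 <= c w.
    have [_ H2] := Hc w.
    have := H2 (x :: take j p); rewrite /dpath_to /= eqxx Ht => /(_ isT).
    rewrite size_take; case: (ltnP j (size p)) => ? ?; lia.
  have Hw2 : c w + size (drop j p) <= c v0.
    have := @ext_path _ _ _ Hc _ _ Hd.
    by rewrite -last_cat cat_take_drop Hl.
  rewrite /=; apply/set0Pn; exists w; rewrite inE; apply/eqP.
  move: Hw2; rewrite size_drop; lia.
Qed.
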